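(* Let $G$ be a finite graph with minimum degree at least $3$, let $x_0$ be a vertex of $G$, let $P$ be a longest path in $G$ starting at $x_0$, and let $(S,T)$ be the Pósa pair of $P$. Let $T_1$ be the set of vertices $t\in T$ having exactly one neighbor in $S$. Let $G^*$ be the graph on vertex set $S\cup(T\setminus T_1)$ whose edges are the edges of $G$ between vertices of $S\cup (T\setminus T_1)$ having at least one endpoint in $S$, and let $d(v;G^* )$ denote the degree of $v$ in $G^*$. Let $S_2=\{v\in S: d(v;G^* )=2\}$. Then: (i) No vertex of $S_2$ is adjacent in $G^*$ both to a vertex of $S_2$ and to a vertex of $T\setminus T_1$. (ii) Write $s=|S|$, $t=|T|$, $t_1=|T_1|$, and suppose $e(S\cup T)=(1+\sigma)(s+t)$ for some $\sigma>0$, where $e(S\cup T)$ is the number of edges of $G$ with both endpoints in $S\cup T$. Then $$s-2\sigma(s+t)\le t_1\le s,\qquad \sum_{v\in S\cup(T\setminus T_1)}\bigl[d(v;G^* )-2\bigr]\le 2\sigma(s+t).$$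
   Context: Rotations and Pósa sets: If $Q=x_0x_1\dots x_h$ is a path from $x_0$ and $\{x_h,x_i\}$ is an edge of $G$ for some $i<h-1$, then $Q'=x_0\dots x_i x_h x_{h-1}\dots x_{i+1}$ is again a path from $x_0$ of the same length, said to be obtained from $Q$ by a rotation. For a longest path $P=x_0\dots x_h$ from $x_0$, $S$ is the set consisting of $x_h$ and the endpoints (other than $x_0$) of all paths obtainable from $P$ by any finite sequence of rotations, and $T=N(S)$ is the set of vertices not in $S$ having a neighbor in $S$. *)

(* Defs.v *)
From mathcomp Require Import all_boot all_order all_algebra.
Set Implicit Arguments. Unset Strict Implicit. Unset Printing Implicit Defensive.

Section Posa.
Variables (V : finType) (e : rel V).

Definition is_path_from (x0 : V) (p : seq V) : bool :=
  [&& head x0 p == x0, (p != [::]), uniq p & path e x0 (behead p)].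

Definition longest_path_from (x0 : V) (p : seq V) : Prop :=
  is_path_from x0 p /\ forall q, is_path_from x0 q -> size q <= size p.

(* Rotation: Q = x_0 ... x_h, edge {x_h, x_i} with i < h-1 gives
   Q' = x_0 ... x_i x_h x_{h-1} ... x_{i+1}. *)
Definition rotation (x0 : V) (p q : seq V) : Prop :=
  exists i : nat, [/\ i.+3 <= size p,
    e (last x0 p) (nth x0 p i) &
    q = take i.+1 p ++ rev (drop i.+1 p)].

Inductive rot_reach (x0 : V) (p : seq V) : seq V -> Prop :=
| rot_refl : rot_reach x0 p p
| rot_step q r : rot_reach x0 p q -> rotation x0 q r -> rot_reach x0 p r.

Definition posa_S (x0 : V) (P : seq V) (S : {set V}) : Prop :=
  forall v, v \in S <-> exists q, rot_reach x0 P q /\ last x0 q = v.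

Definition nbhd_out (S : {set V}) : {set V} :=
  [set v | (v \notin S) && [exists u in S, e v u]].

Definition deg (f : rel V) (v : V) : nat := #|[set w | f v w]|.

End Posa.

(* Main.v *)
Require Import Defs.
From mathcomp Require Import all_boot all_order all_algebra zify lra.
Import Order.TTheory GRing.Theory Num.Theory.
Set Implicit Arguments. Unset Strict Implicit. Unset Printing Implicit Defensive.
Import Order.TTheory GRing.Theory Num.Theory.

Lemma last_take_nth (T : Type) (x0 : T) (s : seq T) i :
  i <= size s -> last x0 (take i s) = nth x0 (x0 :: s) i.
Proof.
elim: s x0 i => [|y s IH] x0 [|i] //= Hi.
by rewrite IH // (set_nth_default x0) //= ltnS.
Qed.

Lemma ipf_inv (V : finType) (e : rel V) x0 q :
  is_path_from e x0 q -> exists q', q = x0 :: q' /\ uniq (x0 :: q') /\ path e x0 q'.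
Proof.
case: q => [|y q']; rewrite /is_path_from => /and4P[H1 H2 Hu Hp]; first by move: H2.
move: H1 Hu Hp => /= /eqP Hy; subst y => Hu Hp.
by exists q'.
Qed.

Lemma ipf_mk (V : finType) (e : rel V) x0 q' :
  uniq (x0 :: q') -> path e x0 q' -> is_path_from e x0 (x0 :: q').
Proof. by move=> Hu Hp; apply/and4P; split. Qed.

Lemma rot_ok (V : finType) (e : rel V) (e_sym : symmetric e) x0 q r :
  is_path_from e x0 q -> rotation e x0 q r -> is_path_from e x0 r /\ perm_eq r q.
Proof.
move=> /ipf_inv [q' [-> [Hu Hp]]] [i [Hsz He ->]] /=.
have Hperm : perm_eq (x0 :: (take i q' ++ rev (drop i q'))) (x0 :: q').
  rewrite perm_cons -{3}(cat_take_drop i q') perm_cat2l.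
  by rewrite perm_rev.
split=> //; apply: ipf_mk; first by rewrite (perm_uniq Hperm).
move: Hp; rewrite -{1}(cat_take_drop i q') !cat_path => /andP[-> Hd] /=.
move: He Hd; rewrite /= -last_take_nth; last by move: Hsz => /=; lia.
set u := last x0 (take i q').
have : i < size q' by move: Hsz => /=; lia.
move=> /(drop_nth x0) ->.
set d := nth x0 q' i; set D' := drop i.+1 q'.
have Hl : last x0 q' = last d D'.
  by rewrite -{1}(cat_take_drop i q') last_cat (drop_nth x0) //; move: Hsz => /=; lia.
rewrite Hl => He /= /andP[_ Hd].
rewrite lastI rev_rcons /= e_sym He /=.
rewrite rev_path.
by rewrite (eq_path (e' := e)) // => a b; rewrite e_sym.
Qed.

Lemma rot_reach_inv (V : finType) (e : rel V) (e_sym : symmetric e) x0 P q :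
  is_path_from e x0 P -> rot_reach e x0 P q -> is_path_from e x0 q /\ perm_eq q P.
Proof.
move=> HP; elim=> [|q' r _ [IH1 IH2] Hr]; first by split.
have [H1 H2] := rot_ok e_sym IH1 Hr.
by split=> //; apply: perm_trans H2 IH2.
Qed.

Lemma key (V : finType) (e : rel V) (e_sym : symmetric e) (e_irr : irreflexive e)
  x0 P (HP : longest_path_from e x0 P) S (HS : posa_S e x0 P S) q
  (Hq : rot_reach e x0 P q) w (Hw : e (last x0 q) w) :
  w \in q /\ (w = nth x0 q (size q).-2 \/ exists y, [/\ y \in S, e w y & y != last x0 q]).
Proof.
have [Hpq Hperm] := rot_reach_inv e_sym HP.1 Hq.
have Hsize : size q = size P := perm_size Hperm.
have [q' [Eq [Hu Hp]]] := ipf_inv Hpq.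
have Hwq : w \in q.
  apply/negPn/negP => Hn.
  have : is_path_from e x0 (rcons q w).
    rewrite Eq rcons_cons; apply: ipf_mk.
      by rewrite -rcons_cons rcons_uniq -Eq Hn Eq.
    by rewrite rcons_path Hp; move: Hw; rewrite Eq.
  by move/HP.2; rewrite size_rcons Hsize ltnn.
split=> //.
set k := index w q.
have Hk : k < size q by rewrite index_mem.
have Hnz : w != last x0 q by apply/eqP => Ew; move: Hw; rewrite -Ew e_irr.
have Huq : uniq q by rewrite Eq.
have Hk1 : k != (size q).-1.
  apply/eqP => Ek; move: Hnz; rewrite -(nth_index x0 Hwq) -/k Ek nth_last eqxx.
  by [].
have [Ek2|Hk2] := eqVneq k (size q).-2.
  by left; rewrite -Ek2 /k nth_index.
right.
have Hk3 : k.+3 <= size q by move: Hk Hk1 Hk2; lia.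
set r := take k.+1 q ++ rev (drop k.+1 q).
have Hr : rot_reach e x0 P r.
  apply: rot_step Hq _; exists k; split => //.
  by rewrite nth_index.
have Hlr : last x0 r = nth x0 q k.+1.
  rewrite /r last_cat (drop_nth x0); last by move: Hk3; lia.
  by rewrite rev_cons last_rcons.
exists (nth x0 q k.+1); split.
- by apply/(HS _).2; exists r.
- move: Hp => /(pathP x0) Hp.
  have := Hp k; rewrite -Eq -(nth_index x0 Hwq) -/k.
  rewrite Eq /=; apply; move: Hk3; rewrite Eq /=; lia.
- have H1 : k.+1 < size q by lia.
  have H2 : (size q).-1 < size q by rewrite ltn_predL; lia.
  rewrite -nth_last nth_uniq //.
  apply/eqP => E; by move: Hk2; rewrite -E /= eqxx.
Qed.
Lemma cardP (T : finType) (P : pred T) : #|[set x | P x]| = \sum_x (P x : nat).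
Proof.
rewrite -sum1_card big_mkcond /=; apply: eq_bigr => x _.
by rewrite in_set; case: (P x).
Qed.

Lemma card_pairs (V : finType) (r : V -> V -> bool) :
  #|[set p : V * V | r p.1 p.2]| = \sum_x #|[set y | r x y]|.
Proof.
rewrite cardP -(pair_big xpredT xpredT (fun x y => (r x y : nat))) /=.
by apply: eq_bigr => x _; rewrite cardP.
Qed.

Lemma card_pairs_swap (V : finType) (r : V -> V -> bool) :
  #|[set p : V * V | r p.1 p.2]| = #|[set p : V * V | r p.2 p.1]|.
Proof.
rewrite !cardP -(pair_big xpredT xpredT (fun x y => (r x y : nat))) /=.
rewrite -(pair_big xpredT xpredT (fun x y => (r y x : nat))) /=.
exact: exchange_big.
Qed.

Local Open Scope ring_scope.

Theorem lemma2p2 (V : finType) (e : rel V)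
  (e_sym : symmetric e) (e_irr : irreflexive e)
  (mindeg : forall v : V, (3 <= deg e v)%N)
  (x0 : V) (P : seq V) (HP : longest_path_from e x0 P)
  (S T : {set V}) (HS : posa_S e x0 P S) (HT : T = nbhd_out e S) :
  let T1 := [set t in T | #|[set u in S | e t u]| == 1%N] in
  let Vs := S :|: (T :\: T1) in
  let es := [rel u v | [&& e u v, u \in Vs, v \in Vs & (u \in S) || (v \in S)]] in
  let S2 := [set v in S | deg es v == 2%N] in
  (forall v, v \in S2 ->
     ~ ((exists2 u, u \in S2 & es v u) /\ (exists2 u, u \in T :\: T1 & es v u)))
  /\
  (forall (R : realFieldType) (sigma : R), 0 < sigma ->
     (* e(S u T) = (number of ordered adjacent pairs in S u T) / 2 *)
     (#|[set p : V * V | [&& e p.1 p.2, p.1 \in S :|: T & p.2 \in S :|: T]]|%:R / 2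
        = (1 + sigma) * (#|S|%:R + #|T|%:R)) ->
     [/\ #|S|%:R - 2 * sigma * (#|S|%:R + #|T|%:R) <= (#|T1|%:R : R),
         (#|T1| <= #|S|)%N &
         \sum_(v in Vs) ((deg es v)%:R - 2) <= 2 * sigma * (#|S|%:R + #|T|%:R)]).
Proof.
move=> T1 Vs es S2.
have inT : forall v, (v \in T) = (v \notin S) && [exists u in S, e v u].
  by move=> v; rewrite HT inE.
have ST : forall v, v \in T -> v \notin S by move=> v; rewrite inT => /andP[].
have inT1 : forall v, (v \in T1) = (v \in T) && (#|[set u in S | e v u]| == 1%N).
  by move=> v; rewrite inE.
have nS_T : forall z w, z \in S -> e z w -> w \notin S -> w \in T.
  move=> z w Hz Hzw Hw; rewrite inT Hw /=; apply/existsP; exists z.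
  by rewrite Hz e_sym.
have F1 : forall z w, w \in T1 -> e z w -> forall q, rot_reach e x0 P q ->
    last x0 q = z -> w = nth x0 q (size q).-2.
  move=> z w Hw Hzw q Hq Hl.
  have Hw' : e (last x0 q) w by rewrite Hl.
  have [_ [//|[y [Hy Hwy Hyz]]]] := key e_sym e_irr HP HS Hq Hw'.
  have Hz : z \in S by apply/(HS z).2; exists q.
  move: Hw; rewrite inT1 => /andP[_ /eqP H1].
  have : (#|[set z; y]| <= #|[set u in S | e w u]|)%N.
    apply: subset_leq_card; apply/subsetP => u; rewrite !inE => /orP[] /eqP ->.
      by rewrite Hz e_sym.
    by rewrite Hy Hwy.
  by rewrite H1 cards2 -Hl eq_sym Hyz.
have nb1 : forall z, z \in S -> (#|[set t in T1 | e z t]| <= 1)%N.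
  move=> z /(HS z).1 [q [Hq Hl]].
  rewrite -(cards1 (nth x0 q (size q).-2)); apply: subset_leq_card.
  apply/subsetP => t /setIdP[Ht Hzt]; rewrite in_set1.
  by rewrite (F1 z t Ht Hzt q Hq Hl) eqxx.
split.
  move=> v; rewrite inE => /andP[HvS /eqP Hdv] [[a Ha Hva] [b Hb Hvb]].
  move: Ha; rewrite inE => /andP[HaS /eqP Hda].
  have [w Hw Hnw] : exists2 w, w \in [set w | e a w] & w \notin [set w | es a w].
    apply/subsetPn; apply/negP => Hsub.
    by have := subset_leq_card Hsub; rewrite -/(deg e a) -/(deg es a) Hda; 
       move: (mindeg a); case: (deg e a) => [|[|[|]]].
  move: Hw Hnw; rewrite !in_set /= => Haw.
  have HaVs : a \in Vs by rewrite inE HaS.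
  rewrite Haw HaVs HaS /= andbT => HwVs.
  have HwS : w \notin S by apply: contra HwVs; rewrite inE => ->.
  have HwT1 : w \in T1.
    move: HwVs; rewrite !inE negb_or => /andP[_]; rewrite negb_and negbK.
    by rewrite (nS_T a w HaS Haw HwS) orbF.
  have [Rq [HR HRl]] := (HS a).1 HaS.
  have Ew := F1 a w HwT1 Haw Rq HR HRl.
  have Hva' : e v a by move: Hva => /= /andP[].
  have Hav : e (last x0 Rq) v by rewrite HRl e_sym.
  have [_ [Ev|[y [Hy Hvy Hya]]]] := key e_sym e_irr HP HS HR Hav.
    by move: HwS; rewrite Ew -Ev HvS.
  have HbS : b \notin S by move: Hb; rewrite inE => /andP[_ /ST].
  have HvVs : v \in Vs by rewrite inE HvS.
  have Hvy' : es v y by rewrite /= Hvy HvVs inE Hy HvS.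
  have : (#|[set a; b; y]| <= #|[set u | es v u]|)%N.
    apply: subset_leq_card; apply/subsetP => u Hu; rewrite in_set.
    move: Hu; rewrite !in_setU !in_set1 => /orP[/orP[]|] /eqP ->.
    - exact Hva.
    - exact Hvb.
    - exact Hvy'.
  rewrite -/(deg es v) Hdv.
  rewrite -setUA cardsU1 cards2 !inE negb_or.
  have -> : a != b by apply: contraNneq HbS => <-.
  have -> : b != y by apply: contraNneq HbS => ->.
  have -> : a != y by rewrite eq_sym -HRl.
  by [].
move=> R sigma Hs Heq.
have T1T : forall x, x \in T1 -> x \in T by move=> x; rewrite inT1 => /andP[].
have T1S : forall x, x \in T1 -> x \notin S by move=> x /T1T /ST.
have HI0 : S :&: (T :\: T1) = set0.
  apply/setP => x; rewrite !inE; case HxS: (x \in S) => //=.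
  by case HxT: (x \in T) => //; move: (ST x HxT); rewrite HxS.
have HVs : (#|Vs| = #|S| + #|T :\: T1|)%N by rewrite -cardsUI HI0 cards0 addn0.
have HTD : (#|T :\: T1| + #|T1| = #|T|)%N.
  rewrite cardsD; have -> : T :&: T1 = T1.
    by apply/setIidPr/subsetP => x /T1T.
  have : (#|T1| <= #|T|)%N by apply/subset_leq_card/subsetP => x /T1T.
  lia.
have HD1 : #|[set p : V * V | [&& p.1 \in T1, p.2 \in S & e p.1 p.2]]| = #|T1|.
  rewrite (card_pairs (fun x y => [&& x \in T1, y \in S & e x y])) -sum1_card [RHS]big_mkcond /=.
  apply: eq_bigr => x _; case Hx: (x \in T1) => /=.
    move: Hx; rewrite inT1 => /andP[_ /eqP <-]; apply: eq_card => y.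
    by rewrite !inE.
  by apply: eq_card0 => y; rewrite in_set.
have HD2 : #|[set p : V * V | [&& p.1 \in S, p.2 \in T1 & e p.1 p.2]]| = #|T1|.
  rewrite -HD1 (card_pairs_swap (fun x y => [&& x \in T1, y \in S & e x y])) /=.
  by apply: eq_card => p; rewrite !inE e_sym andbCA.
have HsumS : (\sum_(z in S) #|[set t in T1 | e z t]| = #|T1|)%N.
  rewrite -HD2 (card_pairs (fun x y => [&& x \in S, y \in T1 & e x y])) /=.
  rewrite [RHS](bigID (mem S)) /= [X in _ = (_ + X)%N]big1 ?addn0.
    by apply: eq_bigr => z Hz; apply: eq_card => t; rewrite !inE Hz.
  by move=> z Hz; apply: eq_card0 => t; rewrite !inE (negbTE Hz).
have Ht1s : (#|T1| <= #|S|)%N.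
  rewrite -HsumS -[X in (_ <= X)%N]sum1_card; apply: leq_sum => z Hz; exact: nb1.
have HM : (\sum_(v in Vs) deg es v = #|[set p : V * V | es p.1 p.2]|)%N.
  rewrite (card_pairs es) /deg [RHS](bigID (mem Vs)) /= [X in _ = (_ + X)%N]big1 ?addn0 //.
  by move=> x Hx; apply: eq_card0 => y; rewrite in_set /= (negbTE Hx) /= andbF.
have HB : (#|[set p : V * V | es p.1 p.2]| + #|[set p : V * V | [&& p.1 \in T1, p.2 \in S & e p.1 p.2]]|
   + #|[set p : V * V | [&& p.1 \in S, p.2 \in T1 & e p.1 p.2]]|
   <= #|[set p : V * V | [&& e p.1 p.2, p.1 \in S :|: T & p.2 \in S :|: T]]|)%N.
  rewrite !cardP -!big_split /=; apply: leq_sum => p _.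
  have : [&& (p.1 \in T) ==> (p.1 \notin S), (p.2 \in T) ==> (p.2 \notin S),
     (p.1 \in T1) ==> (p.1 \in T) & (p.2 \in T1) ==> (p.2 \in T)].
    by rewrite !(introT implyP (ST _)) !(introT implyP (T1T _)).
  rewrite /es /Vs /= !in_setU !in_setD.
  case: (p.1 \in S); case: (p.1 \in T); case: (p.1 \in T1);
  case: (p.2 \in S); case: (p.2 \in T); case: (p.2 \in T1); case: (e p.1 p.2);
  by move=> /= H.
have HsplitV : (\sum_(v in Vs) deg es v = \sum_(v in S) deg es v + \sum_(v in T :\: T1) deg es v)%N.
  rewrite (bigID (mem S)) /=; congr (_ + _)%N; apply: eq_bigl => v; rewrite /Vs !in_setU !in_setD /=.
    by case: (boolP (v \in S)) => HvS; rewrite ?HvS /= ?andbF ?andbT ?orbT.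
  case: (boolP (v \in S)) => HvS; rewrite ?HvS /= ?andbF ?andbT //.
  by case: (boolP (v \in T)) => HvT; [move: (ST v HvT); rewrite HvS | rewrite andbF].
have HlowS : (3 * #|S| <= \sum_(z in S) deg es z + #|T1|)%N.
  rewrite -HsumS -big_split /= mulnC -sum_nat_const; apply: leq_sum => z Hz.
  apply: leq_trans (mindeg z) _; rewrite /deg.
  apply: leq_trans (leq_card_setU _ _); apply: subset_leq_card; apply/subsetP => w.
  rewrite in_set in_setU => Hzw.
  have HzVs : z \in Vs by rewrite in_setU Hz.
  case HwS: (w \in S).
    by rewrite in_set /= Hzw HzVs Hz in_setU HwS.
  have HwT := nS_T z w Hz Hzw (negbT HwS).
  case HwT1: (w \in T1).
    by rewrite [X in _ || X]in_set HwT1 Hzw orbT.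
  by rewrite in_set /= Hzw HzVs Hz in_setU in_setD HwT1 HwT orbT.
have HlowT : (2 * #|T :\: T1| <= \sum_(v in T :\: T1) deg es v)%N.
  rewrite mulnC -sum_nat_const; apply: leq_sum => v; rewrite in_setD => /andP[HvT1 HvT].
  have HvVs : v \in Vs by rewrite in_setU in_setD HvT1 HvT orbT.
  apply: (@leq_trans #|[set u in S | e v u]|).
    have : (0 < #|[set u in S | e v u]|)%N.
      move: HvT; rewrite inT => /andP[_ /existsP[u /andP[HuS Hvu]]].
      by apply/card_gt0P; exists u; rewrite in_set HuS Hvu.
    move: HvT1; rewrite inT1 HvT /= => /eqP.
    by case: #|[set u in S | e v u]| => [|[|]].
  apply: subset_leq_card; apply/subsetP => u /setIdP[HuS Hvu].
  by rewrite in_set /= Hvu HvVs in_setU HuS orbT.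
set NN := #|[set p : V * V | [&& e p.1 p.2, p.1 \in S :|: T & p.2 \in S :|: T]]| in HB Heq *.
set MM := #|[set p : V * V | es p.1 p.2]| in HM HB.
rewrite HD1 HD2 in HB.
have HMM : \sum_(v in Vs) ((deg es v)%:R - 2) = MM%:R - 2 * (#|Vs|%:R) :> R.
  by rewrite sumrB -natr_sum HM sumr_const mulr_natr.
rewrite HMM.
have E1 : (MM + #|T1| + #|T1| <= NN)%N by [].
have E2 : (#|S| + #|S| + #|S| + (#|T :\: T1| + #|T :\: T1|) <= MM + #|T1|)%N.
  by rewrite -HM HsplitV; lia.
have R1 : (MM%:R + #|T1|%:R + #|T1|%:R <= NN%:R :> R) by rewrite -!natrD ler_nat.
have R2 : (#|S|%:R + #|S|%:R + #|S|%:R + (#|T :\: T1|%:R + #|T :\: T1|%:R) <= MM%:R + #|T1|%:R :> R).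
  by move: E2; rewrite -(ler_nat R) !natrD.
have R3 : #|Vs|%:R = #|S|%:R + #|T :\: T1|%:R :> R by rewrite HVs natrD.
have R4 : #|T :\: T1|%:R + #|T1|%:R = #|T|%:R :> R by rewrite -HTD natrD.
rewrite R3; split=> //; lra.
Qed.
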